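(* Let $N\ge 1$, let $q\in\mathbb{C}$ with $[k]_q\neq 0$ for all $k\ge1$, and set $g(k)=[k]_q$ for $k\ge 1$ (so $g(1)=1$, $g(2)=1+q$). Let $u^0:\mathbb{Z}^N\times[0,\infty)\to\mathbb{C}$ be differentiable in $t$ and satisfy, for all $(x_N,\dots,x_1)\in\mathbb{Z}^N$ and $t\ge 0$, $$\frac{d}{dt}u^0(x_N,\dots,x_1;t)=\sum_{i=1}^N u^0(x_N,\dots,x_{i+1},x_i-1,x_{i-1},\dots,x_1;t)-N\,u^0(x_N,\dots,x_1;t),$$ and, for every $2\le i\le N$ and all integer arguments, $$u^0(\dots,x_{i+1},x_i,x_i-1,x_{i-2},\dots;t)=q\,u^0(\dots,x_{i+1},x_i-1,x_i,x_{i-2},\dots;t)-(q-1)\,u^0(\dots,x_{i+1},x_i,x_i,x_{i-2},\dots;t).$$ Define, for $X\in\mathbf{S}$, $u(X;t)=u^0(X;t)\big/\prod_{\mathbf{x}\in\Lambda(X)}\prod_{k=1}^{\eta_X(\mathbf{x})}g(k)$. Let $X\in\mathbf{S}$ be such that, for some $K\ge0$, $n\ge1$ with $K+n\le N$, $x_{K+1}=\cdots=x_{K+n}=x$ and every site of $\Lambda(X)$ other than $x$ is occupied by exactly one particle. Then $$\frac{d}{dt}u(X;t)=\sum_{\mathbf{x}\in\Lambda(X)} g\big(\eta_{X^{\mathbf{x}}}(\mathbf{x}-1)\big)\,u(X^{\mathbf{x}};t)-\Big(\sum_{\mathbf{x}\in\Lambda(X)}g(\eta_X(\mathbf{x}))\Big)u(X;t),$$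 i.e. $u$ satisfies at $X$ the master equation of the totally asymmetric zero range process with jump rates $g$.
   Context: $[k]_q:=1+q+\cdots+q^{k-1}$. $\mathbf{S}=\{(x_N,\dots,x_1)\in\mathbb{Z}^N: x_N\le x_{N-1}\le\cdots\le x_1\}$ is the set of configurations of $N$ indistinguishable particles on $\mathbb{Z}$ ($x_j$ = position of the $j$-th right-most particle). For $X\in\mathbf{S}$, $\Lambda(X)$ is the set of occupied sites and $\eta_X(\mathbf{x})$ is the number of particles of $X$ at site $\mathbf{x}$. For $\mathbf{x}\in\Lambda(X)$, $X^{\mathbf{x}}\in\mathbf{S}$ denotes the configuration obtained from $X$ by moving one particle from site $\mathbf{x}$ to site $\mathbf{x}-1$. (In the totally asymmetric zero range process with rates $g$, a site occupied by $k$ particles emits one particle to the right neighbour at rate $g(k)$.) *)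

(* Defs.v *)
From Stdlib Require Import Reals ZArith List.
Import ListNotations.
Open Scope R_scope.

Definition CC : Type := (R * R)%type.
Definition Cre (z : CC) : R := fst z.
Definition Cim (z : CC) : R := snd z.
Definition RtoC (r : R) : CC := (r, 0).
Definition Czero : CC := (0, 0).
Definition Cone : CC := (1, 0).
Definition Cadd (z w : CC) : CC := (fst z + fst w, snd z + snd w).
Definition Copp (z : CC) : CC := (- fst z, - snd z).
Definition Csub (z w : CC) : CC := Cadd z (Copp w).
Definition Cmul (z w : CC) : CC :=
  (fst z * fst w - snd z * snd w, fst z * snd w + snd z * fst w).
Definition Cinv (z : CC) : CC :=
  let d := fst z * fst z + snd z * snd z in (fst z / d, - snd z / d).
Definition Cdiv (z w : CC) : CC := Cmul z (Cinv w).
Definition Cnorm (z : CC) : R := sqrt (fst z * fst z + snd z * snd z).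
Fixpoint Cpow (z : CC) (n : nat) : CC :=
  match n with O => Cone | S m => Cmul z (Cpow z m) end.

Definition Csum (l : list CC) : CC := fold_right Cadd Czero l.
Definition Cprod (l : list CC) : CC := fold_right Cmul Cone l.

Definition qint (q : CC) (k : nat) : CC := Csum (map (Cpow q) (seq 0 k)).
Definition qfact (q : CC) (n : nat) : CC := Cprod (map (qint q) (seq 1 n)).

Definition has_deriv_nonneg (f : R -> CC) (t : R) (l : CC) : Prop :=
  forall eps : R, 0 < eps -> exists delta : R, 0 < delta /\
    forall h : R, h <> 0 -> Rabs h < delta -> 0 <= t + h ->
      Cnorm (Csub (Cmul (RtoC (/ h)) (Csub (f (t + h)) (f t))) l) < eps.

(* A point (x_N, ..., x_1) of Z^N is the list [x_N; ...; x_1] of length N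
   (written in the same left-to-right order as in the paper).
   coord l i = x_i (1 <= i <= N), upd l i y replaces x_i by y. *)
Definition coord (l : list Z) (i : nat) : Z := nth (length l - i)%nat l 0%Z.

Fixpoint set_nth (n : nat) (l : list Z) (y : Z) : list Z :=
  match l, n with
  | [], _ => []
  | _ :: l', O => y :: l'
  | a :: l', S m => a :: set_nth m l' y
  end.
Definition upd (l : list Z) (i : nat) (y : Z) : list Z :=
  set_nth (length l - i)%nat l y.

Definition in_S (X : list Z) : Prop := forall i : nat,
  (1 <= i)%nat -> (i < length X)%nat -> (coord X (S i) <= coord X i)%Z.

Definition eta (X : list Z) (x : Z) : nat := count_occ Z.eq_dec X x.
Definition Lambda (X : list Z) : list Z := nodup Z.eq_dec X.

(* X^x : move one particle from site x to site x-1.  In the nondecreasing list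
   [x_N; ...; x_1] we move the left-most particle at x, which keeps the list
   nondecreasing. *)
Fixpoint move_first (x : Z) (X : list Z) : list Z :=
  match X with
  | [] => []
  | a :: X' => if Z.eq_dec a x then (x - 1)%Z :: X' else a :: move_first x X'
  end.
Definition Xmove (X : list Z) (x : Z) : list Z := move_first x X.

Definition uZRP (q : CC) (u0 : list Z -> R -> CC) (X : list Z) (t : R) : CC :=
  Cdiv (u0 X t) (Cprod (map (fun x => qfact q (eta X x)) (Lambda X))).

(* Main.v *)
Require Import Defs.
From Stdlib Require Import Reals ZArith List Sorted Lia Lra Field.
Import ListNotations.
Open Scope R_scope.

Lemma CC_ring : ring_theory Czero Cone Cadd Cmul Csub Copp (@eq CC).
Proof.
  constructor; intros; repeat match goal with z : CC |- _ => destruct z end;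
  unfold Csub, Cadd, Cmul, Copp, Czero, Cone; simpl; f_equal; ring.
Qed.

Lemma CC_field : field_theory Czero Cone Cadd Cmul Csub Copp Cdiv Cinv (@eq CC).
Proof.
  constructor.
  - exact CC_ring.
  - unfold Cone, Czero; intro H; injection H; lra.
  - reflexivity.
  - intros [a b] Hp. unfold Cmul, Cinv, Cone; simpl.
    assert (Hd : a * a + b * b <> 0).
    { intro Hd. apply Hp. unfold Czero.
      assert (a = 0) by nra. assert (b = 0) by nra. subst; reflexivity. }
    f_equal; field; auto.
Qed.

Add Field CCfield : CC_field.

Lemma Cnorm_mul a b : Cnorm (Cmul a b) = Cnorm a * Cnorm b.
Proof.
  destruct a as [a1 a2], b as [b1 b2]; unfold Cnorm, Cmul; simpl.
  rewrite <- sqrt_mult by nra. f_equal; ring.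
Qed.

Lemma deriv_scale f t l c :
  has_deriv_nonneg f t l ->
  has_deriv_nonneg (fun s => Cmul (f s) c) t (Cmul l c).
Proof.
  intros H eps Heps.
  assert (Hc : 0 <= Cnorm c) by (unfold Cnorm; apply sqrt_pos).
  destruct (H (eps / (Cnorm c + 1))) as [d [Hd Hh]].
  { apply Rdiv_lt_0_compat; lra. }
  exists d; split; auto. intros h H1 H2 H3.
  specialize (Hh h H1 H2 H3).
  replace (Csub (Cmul (RtoC (/ h)) (Csub (Cmul (f (t + h)) c) (Cmul (f t) c))) (Cmul l c))
    with (Cmul (Csub (Cmul (RtoC (/ h)) (Csub (f (t + h)) (f t))) l) c) by ring.
  rewrite Cnorm_mul.
  set (e' := eps / (Cnorm c + 1)) in *.
  assert (He : e' * (Cnorm c + 1) = eps) by (unfold e'; field; lra).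
  assert (0 < e') by (unfold e'; apply Rdiv_lt_0_compat; lra).
  set (nd := Cnorm _) in *.
  assert (0 <= nd) by (unfold nd, Cnorm; apply sqrt_pos).
  nra.
Qed.

Definition dec (p : nat) (Y : list Z) : list Z := set_nth p Y (nth p Y 0%Z - 1)%Z.

Lemma dec_cons p a L : dec (S p) (a :: L) = a :: dec p L.
Proof. reflexivity. Qed.

Lemma dec_app L M j : dec (length L + j) (L ++ M) = L ++ dec j M.
Proof. induction L; simpl; auto. rewrite dec_cons, IHL; reflexivity. Qed.

Lemma dec_rep y p e M : (p <= e)%nat ->
  dec p (repeat y (S e) ++ M) = repeat y p ++ (y - 1)%Z :: repeat y (e - p) ++ M.
Proof.
  revert e; induction p; intros e He.
  - simpl. rewrite Nat.sub_0_r. reflexivity.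
  - destruct e; [lia|]. change (repeat y (S (S e)) ++ M) with (y :: (repeat y (S e) ++ M)).
    rewrite dec_cons, IHp by lia. reflexivity.
Qed.

Lemma set_nth_length n l y : length (set_nth n l y) = length l.
Proof. revert n; induction l; intros [|n]; simpl; auto. Qed.

Lemma set_nth_app L M p v : set_nth (length L + p) (L ++ M) v = L ++ set_nth p M v.
Proof. induction L; simpl; auto. rewrite IHL; reflexivity. Qed.

Lemma map_seq_shift {B} (f : nat -> B) k L :
  map f (seq k L) = map (fun j => f (k + j)%nat) (seq 0 L).
Proof.
  revert k f; induction L; intros k f; simpl; auto.
  rewrite IHL. rewrite (IHL 1%nat). rewrite Nat.add_0_r. f_equal.
  apply map_ext; intros; f_equal; lia.
Qed.

Lemma count_rep y n z : count_occ Z.eq_dec (repeat y n) z = if Z.eq_dec y z then n else 0%nat.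
Proof. induction n; simpl; destruct (Z.eq_dec y z); auto. Qed.

Lemma mf_rep z y k M : z <> y -> move_first z (repeat y k ++ M) = repeat y k ++ move_first z M.
Proof. intros H; induction k; simpl; auto. destruct (Z.eq_dec y z); [congruence|]. rewrite IHk; auto. Qed.

Lemma nodup_cons_in a l : In a l -> nodup Z.eq_dec (a :: l) = nodup Z.eq_dec l.
Proof. intros H. unfold nodup at 1; fold (nodup Z.eq_dec l). destruct (in_dec Z.eq_dec a l); tauto. Qed.

Lemma nodup_rep y e M : ~ In y M -> nodup Z.eq_dec (repeat y (S e) ++ M) = y :: nodup Z.eq_dec M.
Proof.
  intros H; induction e.
  - simpl. destruct (in_dec Z.eq_dec y M); tauto.
  - change (repeat y (S (S e)) ++ M) with (y :: (repeat y (S e) ++ M)).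
    rewrite nodup_cons_in; auto. simpl; auto.
Qed.

Lemma sorted_decomp Y y : Sorted Z.le (y :: Y) -> exists e Y'',
  y :: Y = repeat y (S e) ++ Y'' /\ (forall z, In z Y'' -> (y < z)%Z) /\ Sorted Z.le Y''.
Proof.
  revert y; induction Y as [|a Y1 IH]; intros y HS.
  - exists 0%nat, []; simpl; repeat split; auto. intros z [].
  - assert (Hs := HS). apply Sorted_inv in Hs as [Hs1 Hh]. apply HdRel_inv in Hh.
    destruct (Z.eq_dec a y) as [->|Hne].
    + destruct (IH y Hs1) as [e [Y'' [E [H1 H2]]]].
      exists (S e), Y''. rewrite E. repeat split; auto.
    + exists 0%nat, (a :: Y1). repeat split; auto.
      apply Sorted_StronglySorted in Hs1; [|intros ? ? ?; lia].
      apply StronglySorted_inv in Hs1 as [_ HF].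
      intros z [<-|Hz]; [lia|]. rewrite Forall_forall in HF. specialize (HF z Hz). lia.
Qed.

Lemma sorted_of_nth Y : (forall j, (S j < length Y)%nat -> (nth j Y 0 <= nth (S j) Y 0)%Z) -> Sorted Z.le Y.
Proof.
  induction Y as [|a Y IH]; intros H; constructor.
  - apply IH. intros j Hj. apply (H (S j)). simpl; lia.
  - destruct Y; constructor. apply (H 0%nat). simpl; lia.
Qed.

Lemma in_S_sorted X : in_S X -> Sorted Z.le X.
Proof.
  intros H. apply sorted_of_nth. intros j Hj.
  specialize (H (length X - S j)%nat ltac:(lia) ltac:(lia)). unfold coord in H.
  replace (length X - S (length X - S j))%nat with j in H by lia.
  replace (length X - (length X - S j))%nat with (S j) in H by lia. exact H.
Qed.

Lemma cnt_mf_other z X w : w <> z -> w <> (z - 1)%Z ->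
  count_occ Z.eq_dec (move_first z X) w = count_occ Z.eq_dec X w.
Proof.
  intros H1 H2; induction X as [|a X IH]; simpl; auto.
  destruct (Z.eq_dec a z) as [->|].
  - simpl. destruct (Z.eq_dec (z-1) w); [congruence|]. destruct (Z.eq_dec z w); congruence.
  - simpl. destruct (Z.eq_dec a w); auto.
Qed.

Lemma cnt_mf_self z X : count_occ Z.eq_dec (move_first z X) z = pred (count_occ Z.eq_dec X z).
Proof.
  induction X as [|a X IH]; simpl; auto.
  destruct (Z.eq_dec a z) as [->|].
  - simpl. destruct (Z.eq_dec (z-1) z); [lia|]. destruct (Z.eq_dec z z); [|congruence]. reflexivity.
  - simpl. destruct (Z.eq_dec a z); [congruence|]. auto.
Qed.

Lemma cnt_mf_pred z X : In z X ->
  count_occ Z.eq_dec (move_first z X) (z - 1)%Z = S (count_occ Z.eq_dec X (z - 1)%Z).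
Proof.
  induction X as [|a X IH]; simpl; [tauto|]. intros Hin.
  destruct (Z.eq_dec a z) as [->|Hne].
  - simpl. destruct (Z.eq_dec (z-1) (z-1)); [|congruence]. destruct (Z.eq_dec z (z-1)); [lia|]. reflexivity.
  - destruct Hin as [|Hin]; [congruence|]. simpl. destruct (Z.eq_dec a (z-1)); auto.
Qed.

Lemma incl_mf z X : incl (move_first z X) ((z - 1)%Z :: X).
Proof.
  induction X as [|a X IH]; simpl; intros w Hw; [tauto|].
  destruct (Z.eq_dec a z) as [->|].
  - destruct Hw as [<-|Hw]; simpl; auto.
  - destruct Hw as [<-|Hw]; simpl; auto. apply IH in Hw. destruct Hw; auto.
Qed.

Lemma Cmul_nz a b : a <> Czero -> b <> Czero -> Cmul a b <> Czero.
Proof.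
  intros Ha Hb H. apply Hb.
  replace b with (Cmul (Cinv a) (Cmul a b)) by (field; auto).
  rewrite H. ring.
Qed.

Lemma Cprod_nz l : (forall z, In z l -> z <> Czero) -> Cprod l <> Czero.
Proof.
  induction l; simpl; intros H.
  - unfold Cone, Czero; intro E; injection E; lra.
  - apply Cmul_nz; auto.
Qed.

Definition upd1 (f : Z -> CC) (a : Z) (w : Z) : CC := if Z.eq_dec w a then Cone else f w.

Lemma upd1_self f a : upd1 f a a = Cone.
Proof. unfold upd1; destruct (Z.eq_dec a a); congruence. Qed.
Lemma upd1_other f a b : b <> a -> upd1 f a b = f b.
Proof. unfold upd1; destruct (Z.eq_dec b a); congruence. Qed.

Lemma Cprod_extract f S a : NoDup S -> In a S ->
  Cprod (map f S) = Cmul (f a) (Cprod (map (upd1 f a) S)).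
Proof.
  induction S as [|b S IH]; simpl; intros Hn Hin; [tauto|].
  inversion Hn; subst.
  destruct Hin as [->|Hin].
  - assert (E: map (upd1 f a) S = map f S).
    { apply map_ext_in. intros w Hw. unfold upd1. destruct (Z.eq_dec w a); [subst; tauto|auto]. }
    rewrite E. assert (E2 : upd1 f a a = Cone) by (unfold upd1; destruct (Z.eq_dec a a); congruence).
    rewrite E2. ring.
  - rewrite IH by auto. assert (E2 : upd1 f a b = f b) by (unfold upd1; destruct (Z.eq_dec b a); [subst; tauto|auto]).
    rewrite E2. ring.
Qed.

Lemma Cprod_sub (f : Z -> CC) (S T : list Z) : NoDup S -> NoDup T -> incl T S ->
  (forall w, In w S -> ~ In w T -> f w = Cone) ->
  Cprod (map f S) = Cprod (map f T).
Proof.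
  revert f; induction T as [|a T IH]; intros f HS HT Hinc Hf.
  - simpl. clear -Hf. induction S; simpl; auto. rewrite Hf by (simpl; auto).
    rewrite IHS; [ring|]. intros; apply Hf; simpl; auto.
  - inversion HT; subst. rewrite (Cprod_extract f S a) by (auto; apply Hinc; simpl; auto).
    simpl. f_equal. rewrite (IH (upd1 f a)); auto.
    + f_equal. apply map_ext_in. intros w Hw. unfold upd1. destruct (Z.eq_dec w a); [subst; tauto|auto].
    + intros w Hw. apply Hinc; simpl; auto.
    + intros w Hw Hn. unfold upd1. destruct (Z.eq_dec w a); auto. apply Hf; auto.
      simpl; intros [|]; auto.
Qed.

Lemma qfact_S q n : qfact q (S n) = Cmul (qfact q n) (qint q (S n)).
Proof.
  unfold qfact. rewrite seq_S. rewrite map_app. unfold Cprod. rewrite fold_right_app.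
  simpl. replace (1 + n)%nat with (S n) by lia.
  generalize (map (qint q) (seq 1 n)). intro l. induction l; simpl.
  - ring.
  - rewrite IHl. ring.
Qed.

Lemma qfact_nz q n : (forall k : nat, (1 <= k)%nat -> qint q k <> Czero) -> qfact q n <> Czero.
Proof.
  intros H. unfold qfact. apply Cprod_nz. intros z Hz. apply in_map_iff in Hz as [k [<- Hk]].
  apply in_seq in Hk. apply H; lia.
Qed.

Definition DD q X := Cprod (map (fun z => qfact q (eta X z)) (Lambda X)).

Lemma DD_nz q X : (forall k : nat, (1 <= k)%nat -> qint q k <> Czero) -> DD q X <> Czero.
Proof.
  intros H. unfold DD. apply Cprod_nz. intros z Hz. apply in_map_iff in Hz as [k [<- Hk]].
  apply qfact_nz; auto.
Qed.

Lemma DD_sup q X S : NoDup S -> incl X S ->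
  DD q X = Cprod (map (fun z => qfact q (eta X z)) S).
Proof.
  intros HS Hi. unfold DD, Lambda. symmetry. apply Cprod_sub; auto.
  - apply NoDup_nodup.
  - intros w Hw. apply nodup_In in Hw. auto.
  - intros w _ Hn. assert (Hn' : ~ In w X) by (intro; apply Hn; apply nodup_In; auto).
    unfold eta. apply (count_occ_not_In Z.eq_dec) in Hn'. rewrite Hn'. reflexivity.
Qed.

Lemma DD_move q X z : In z X ->
  Cmul (DD q (move_first z X)) (qint q (eta X z)) =
  Cmul (DD q X) (qint q (eta (move_first z X) (z - 1)%Z)).
Proof.
  intros Hz.
  set (S := nodup Z.eq_dec ((z - 1)%Z :: X)).
  assert (HS : NoDup S) by apply NoDup_nodup.
  assert (HzS : In z S) by (apply nodup_In; simpl; auto).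
  assert (Hz1S : In (z - 1)%Z S) by (apply nodup_In; simpl; auto).
  rewrite (DD_sup q X S), (DD_sup q (move_first z X) S); auto.
  2: { intros w Hw. apply nodup_In. apply incl_mf; auto. }
  2: { intros w Hw. apply nodup_In. simpl; auto. }
  set (F1 := fun z0 => qfact q (eta (move_first z X) z0)).
  set (F2 := fun z0 => qfact q (eta X z0)).
  rewrite (Cprod_extract F1 S z), (Cprod_extract (upd1 F1 z) S (z - 1)%Z) by auto.
  rewrite (Cprod_extract F2 S z), (Cprod_extract (upd1 F2 z) S (z - 1)%Z) by auto.
  unfold F1, F2.
  assert (Hne : (z - 1)%Z <> z) by lia.
  rewrite !(upd1_other _ _ _ Hne). cbv beta.
  unfold eta. rewrite cnt_mf_self, cnt_mf_pred by auto.
  assert (Hc : (count_occ Z.eq_dec X z > 0)%nat) by (apply count_occ_In; auto).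
  destruct (count_occ Z.eq_dec X z) as [|e] eqn:E; [lia|]. simpl pred.
  rewrite !qfact_S.
  assert (Hm : map (upd1 (upd1 (fun z0 => qfact q (count_occ Z.eq_dec (move_first z X) z0)) z) (z - 1)) S
             = map (upd1 (upd1 (fun z0 => qfact q (count_occ Z.eq_dec X z0)) z) (z - 1)) S).
  { apply map_ext. intros w. unfold upd1. destruct (Z.eq_dec w (z-1)); auto.
    destruct (Z.eq_dec w z); auto. rewrite cnt_mf_other; auto. }
  rewrite Hm. ring.
Qed.

Definition HypEx (N : nat) (q : CC) (u0 : list Z -> R -> CC) (t : R) :=
  forall L R y, length (L ++ y :: y :: R) = N ->
  u0 (L ++ y :: (y - 1)%Z :: R) t =
  Csub (Cmul q (u0 (L ++ (y - 1)%Z :: y :: R) t)) (Cmul (Csub q Cone) (u0 (L ++ y :: y :: R) t)).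

Lemma hex_from N q u0 t :
  (forall (l : list Z) (t : R) (i : nat) (y : Z), length l = N -> 0 <= t ->
     (2 <= i)%nat -> (i <= N)%nat ->
     u0 (upd (upd l i y) (i - 1) (y - 1)%Z) t =
     Csub (Cmul q (u0 (upd (upd l i (y - 1)%Z) (i - 1) y) t))
          (Cmul (Csub q Cone) (u0 (upd (upd l i y) (i - 1) y) t))) ->
  0 <= t -> HypEx N q u0 t.
Proof.
  intros H Ht L R y Hl.
  assert (HlL : length (L ++ y :: y :: R) = (length L + S (S (length R)))%nat)
    by (rewrite length_app; reflexivity).
  specialize (H (L ++ y :: y :: R) t (S (S (length R))) y Hl Ht ltac:(lia) ltac:(lia)).
  assert (E1 : forall v, upd (L ++ y :: y :: R) (S (S (length R))) v = L ++ v :: y :: R).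
  { intros v. unfold upd. rewrite HlL. replace (length L + S (S (length R)) - S (S (length R)))%nat
      with (length L + 0)%nat by lia. rewrite set_nth_app. reflexivity. }
  assert (E2 : forall v w, upd (L ++ v :: y :: R) (S (S (length R)) - 1) w = L ++ v :: w :: R).
  { intros v w. unfold upd. rewrite length_app. simpl length.
    replace (length L + S (S (length R)) - (S (S (length R)) - 1))%nat
      with (length L + 1)%nat by lia. rewrite set_nth_app. reflexivity. }
  rewrite !E1, !E2 in H. exact H.
Qed.

Lemma rep_cons (y : Z) k R : repeat y k ++ y :: R = y :: repeat y k ++ R.
Proof. induction k; simpl; auto. rewrite IHk; reflexivity. Qed.

Lemma swap_lemma N q u0 t : HypEx N q u0 t -> forall P y k R,
  length (P ++ repeat y k ++ (y - 1)%Z :: R) = N ->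
  u0 (P ++ repeat y k ++ (y - 1)%Z :: R) t =
  Csub (Cmul (Cpow q k) (u0 (P ++ (y - 1)%Z :: repeat y k ++ R) t))
       (Cmul (Csub (Cpow q k) Cone) (u0 (P ++ repeat y (S k) ++ R) t)).
Proof.
  intros Hx P y k. induction k; intros R Hl.
  - simpl. ring.
  - assert (E : P ++ repeat y (S k) ++ (y - 1)%Z :: R = (P ++ repeat y k) ++ y :: (y-1)%Z :: R).
    { rewrite <- app_assoc. f_equal. simpl. rewrite rep_cons. reflexivity. }
    rewrite E. rewrite Hx.
    2: { rewrite !length_app in *. simpl in *. rewrite !repeat_length in *. lia. }
    rewrite <- app_assoc. rewrite IHk.
    2: { rewrite !length_app in *. simpl in *. rewrite !repeat_length in *. lia. }
    rewrite <- app_assoc.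
    assert (E3 : repeat y k ++ y :: R = repeat y (S k) ++ R) by (rewrite rep_cons; reflexivity).
    assert (E4 : repeat y (S k) ++ y :: R = repeat y (S (S k)) ++ R)
      by (rewrite rep_cons; reflexivity).
    assert (E5 : repeat y k ++ y :: y :: R = repeat y (S (S k)) ++ R)
      by (rewrite rep_cons, rep_cons; reflexivity).
    rewrite E3, E4, E5. simpl Cpow. ring.
Qed.

Lemma RtoC_add a b : RtoC (a + b) = Cadd (RtoC a) (RtoC b).
Proof. unfold RtoC, Cadd; simpl; f_equal; ring. Qed.

Lemma sum_geo q (A B : CC) (l : list nat) :
  Csum (map (fun p => Csub (Cmul (Cpow q p) A) (Cmul (Csub (Cpow q p) Cone) B)) l) =
  Csub (Cmul (Csum (map (Cpow q) l)) A)
       (Cmul (Csub (Csum (map (Cpow q) l)) (RtoC (INR (length l)))) B).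
Proof.
  induction l; simpl Csum; simpl map.
  - simpl. change (RtoC 0) with Czero. ring.
  - simpl Csum. rewrite IHl. simpl length.
    assert (RtoC (INR (S (length l))) = Cadd (RtoC (INR (length l))) Cone).
    { rewrite S_INR. unfold RtoC, Cadd, Cone; simpl; f_equal; ring. }
    rewrite H. ring.
Qed.

Lemma Csum_app l1 l2 : Csum (l1 ++ l2) = Cadd (Csum l1) (Csum l2).
Proof. induction l1; simpl. ring. unfold Csum in *; simpl; rewrite IHl1; ring. Qed.

Lemma Csum_cons a l : Csum (a :: l) = Cadd a (Csum l).
Proof. reflexivity. Qed.

Lemma mf_head y L : move_first y (y :: L) = (y - 1)%Z :: L.
Proof. simpl. destruct (Z.eq_dec y y); congruence. Qed.

Lemma main_sum N q u0 t : HypEx N q u0 t -> forall n Y P,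
  (length Y <= n)%nat -> Sorted Z.le Y -> length (P ++ Y) = N ->
  Csum (map (fun p => u0 (P ++ dec p Y) t) (seq 0 (length Y))) =
  Cadd (Csum (map (fun z => Cmul (qint q (count_occ Z.eq_dec Y z))
                           (Csub (u0 (P ++ move_first z Y) t) (u0 (P ++ Y) t)))
                  (nodup Z.eq_dec Y)))
       (Cmul (RtoC (INR (length Y))) (u0 (P ++ Y) t)).
Proof.
  intros Hx n. induction n as [|n IH]; intros Y P Hn HS Hl.
  - destruct Y; simpl in Hn; [|lia]. simpl. change (RtoC 0) with Czero. ring.
  - destruct Y as [|y Y0].
    + simpl. change (RtoC 0) with Czero. ring.
    + destruct (sorted_decomp Y0 y HS) as [e [Y'' [EY [Hlt HS'']]]].
      rewrite EY in *. clear EY HS Y0.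
      assert (Hy : ~ In y Y'') by (intro H; specialize (Hlt y H); lia).
      rewrite length_app, repeat_length in Hn.
      rewrite length_app, repeat_length, seq_app, map_app, Csum_app.
      set (A := u0 (P ++ (y - 1)%Z :: repeat y e ++ Y'') t).
      set (B := u0 (P ++ repeat y (S e) ++ Y'') t).
      rewrite (map_ext_in _ (fun p => Csub (Cmul (Cpow q p) A) (Cmul (Csub (Cpow q p) Cone) B))).
      2: { intros p Hp. apply in_seq in Hp.
           rewrite dec_rep by lia. rewrite (swap_lemma N q u0 t Hx).
           2: { rewrite !length_app, !repeat_length in *. simpl.
                rewrite length_app, repeat_length. lia. }
           assert (E1 : repeat y p ++ repeat y (e - p) ++ Y'' = repeat y e ++ Y'').
           { rewrite app_assoc, <- repeat_app. do 2 f_equal. lia. }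
           assert (E2 : repeat y (S p) ++ repeat y (e - p) ++ Y'' = repeat y (S e) ++ Y'').
           { rewrite app_assoc, <- repeat_app. do 2 f_equal. lia. }
           rewrite E1, E2. reflexivity. }
      rewrite sum_geo, length_seq. change (Csum (map (Cpow q) (seq 0 (S e)))) with (qint q (S e)).
      rewrite map_seq_shift.
      rewrite (map_ext (fun j => u0 (P ++ dec (0 + S e + j) (repeat y (S e) ++ Y'')) t)
                       (fun j => u0 ((P ++ repeat y (S e)) ++ dec j Y'') t)).
      2: { intros j. replace (0 + S e + j)%nat with (length (repeat y (S e)) + j)%nat
             by (rewrite repeat_length; lia). rewrite dec_app, app_assoc. reflexivity. }
      rewrite IH; auto; [| lia | rewrite <- app_assoc; auto].
      rewrite nodup_rep by auto. rewrite map_cons, Csum_cons.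
      rewrite count_occ_app, count_rep. destruct (Z.eq_dec y y); [|congruence].
      rewrite (proj1 (count_occ_not_In Z.eq_dec Y'' y) Hy), Nat.add_0_r.
      change (repeat y (S e) ++ Y'') with (y :: repeat y e ++ Y''). rewrite mf_head.
      change (y :: repeat y e ++ Y'') with (repeat y (S e) ++ Y'').
      rewrite (map_ext_in (fun z => Cmul (qint q (count_occ Z.eq_dec (repeat y (S e) ++ Y'') z))
          (Csub (u0 (P ++ move_first z (repeat y (S e) ++ Y'')) t) B))
        (fun z => Cmul (qint q (count_occ Z.eq_dec Y'' z))
          (Csub (u0 ((P ++ repeat y (S e)) ++ move_first z Y'') t) (u0 ((P ++ repeat y (S e)) ++ Y'') t)))).
      2: { intros z Hz. apply nodup_In in Hz. assert (z <> y) by (specialize (Hlt z Hz); lia).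
           rewrite count_occ_app, count_rep. destruct (Z.eq_dec y z); [congruence|].
           rewrite mf_rep by auto. unfold B. rewrite !app_assoc. reflexivity. }
      rewrite <- !app_assoc. fold A B.
      rewrite plus_INR, RtoC_add. ring.
Qed.

Lemma rev_seq_map {B} (F : nat -> B) N :
  map (fun i => F (N - i)%nat) (seq 1 N) = rev (map F (seq 0 N)).
Proof.
  revert F; induction N; intros F; [reflexivity|].
  rewrite seq_S, map_app. cbn [map]. replace (S N - (1 + N))%nat with 0%nat by lia.
  rewrite (map_ext_in _ (fun i => (fun p => F (S p)) (N - i)%nat)).
  2: { intros i Hi. apply in_seq in Hi. f_equal. lia. }
  rewrite (IHN (fun p => F (S p))). cbn [seq map rev]. rewrite <- seq_shift, map_map. reflexivity.
Qed.

Lemma Csum_rev l : Csum (rev l) = Csum l.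
Proof. induction l; simpl; auto. rewrite Csum_app, IHl. simpl. unfold Csum; simpl. ring. Qed.

Lemma alg1 (e w : Z -> CC) (l : list Z) (u c : CC) :
  Csum (map (fun y => Cmul (Cmul (e y) (w y)) c) l) =
  Cadd (Cmul (Csum (map (fun z => Cmul (e z) (Csub (w z) u)) l)) c)
       (Cmul (Csum (map e l)) (Cmul u c)).
Proof.
  induction l; simpl map; rewrite ?Csum_cons.
  - simpl. ring.
  - rewrite IHl. ring.
Qed.

Theorem proposition1 (N : nat) (q : CC) (u0 : list Z -> R -> CC) :
  (1 <= N)%nat ->
  (forall k : nat, (1 <= k)%nat -> qint q k <> Czero) ->
  (* forward (free) evolution equation *)
  (forall (l : list Z) (t : R), length l = N -> 0 <= t ->
     has_deriv_nonneg (fun s => u0 l s) t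
       (Csub (Csum (map (fun i => u0 (upd l i (coord l i - 1)%Z) t) (seq 1 N)))
             (Cmul (RtoC (INR N)) (u0 l t)))) ->
  (* boundary (exchange) condition *)
  (forall (l : list Z) (t : R) (i : nat) (y : Z), length l = N -> 0 <= t ->
     (2 <= i)%nat -> (i <= N)%nat ->
     u0 (upd (upd l i y) (i - 1) (y - 1)%Z) t =
     Csub (Cmul q (u0 (upd (upd l i (y - 1)%Z) (i - 1) y) t))
          (Cmul (Csub q Cone) (u0 (upd (upd l i y) (i - 1) y) t))) ->
  forall (X : list Z) (K n : nat) (x : Z),
    length X = N -> in_S X ->
    (1 <= n)%nat -> (K + n <= N)%nat ->
    (forall i : nat, (K + 1 <= i)%nat -> (i <= K + n)%nat -> coord X i = x) ->
    (forall y : Z, In y (Lambda X) -> y <> x -> eta X y = 1%nat) ->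
    forall t : R, 0 <= t ->
      has_deriv_nonneg (fun s => uZRP q u0 X s) t
        (Csub
           (Csum (map (fun y => Cmul (qint q (eta (Xmove X y) (y - 1)%Z))
                                     (uZRP q u0 (Xmove X y) t)) (Lambda X)))
           (Cmul (Csum (map (fun y => qint q (eta X y)) (Lambda X)))
                 (uZRP q u0 X t))).
Proof.
  intros HN Hq Hder Hexch X K n x HlX HinS Hn HKn Hcl Hsing t Ht.
  pose proof (Hder X t HlX Ht) as Hd.
  pose proof (deriv_scale _ _ _ (Cinv (DD q X)) Hd) as Hd2.
  assert (Hx := hex_from N q u0 t Hexch Ht).
  assert (Hre : Csum (map (fun i => u0 (upd X i (coord X i - 1)%Z) t) (seq 1 N)) =
                Csum (map (fun p => u0 ([] ++ dec p X) t) (seq 0 (length X)))).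
  { rewrite HlX, <- (Csum_rev (map _ (seq 0 N))), <- rev_seq_map. apply f_equal. apply map_ext.
    intros i. unfold upd, coord, dec. rewrite HlX. reflexivity. }
  rewrite Hre in Hd2.
  rewrite (main_sum N q u0 t Hx (length X) X []) in Hd2; auto.
  2: apply in_S_sorted; auto.
  cbn [app] in Hd2. rewrite HlX in Hd2.
  match goal with |- has_deriv_nonneg _ _ ?L => replace L with
    (Cmul (Csub (Cadd (Csum (map (fun z => Cmul (qint q (count_occ Z.eq_dec X z))
                          (Csub (u0 (move_first z X) t) (u0 X t))) (nodup Z.eq_dec X)))
                       (Cmul (RtoC (INR N)) (u0 X t)))
                 (Cmul (RtoC (INR N)) (u0 X t))) (Cinv (DD q X))) end.
  { exact Hd2. }
  assert (HDX := DD_nz q X Hq).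
  rewrite (map_ext_in (fun y => Cmul (qint q (eta (Xmove X y) (y - 1)%Z)) (uZRP q u0 (Xmove X y) t)) (fun y => Cmul (Cmul (qint q (eta X y)) (u0 (Xmove X y) t)) (Cinv (DD q X)))).
  2: { intros y Hy. unfold Lambda in Hy. apply nodup_In in Hy.
       pose proof (DD_move q X y Hy) as HM.
       assert (HDY := DD_nz q (move_first y X) Hq).
       unfold uZRP. change (Cprod (map (fun x0 => qfact q (eta (Xmove X y) x0)) (Lambda (Xmove X y))))
         with (DD q (move_first y X)).
       unfold Xmove.
       replace (qint q (eta (move_first y X) (y - 1))) with
         (Cdiv (Cmul (DD q (move_first y X)) (qint q (eta X y))) (DD q X)).
       2: { rewrite HM. field. auto. }
       field. split; auto. }
  rewrite (alg1 (fun y => qint q (eta X y)) (fun y => u0 (Xmove X y) t) (Lambda X) (u0 X t)).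
  unfold uZRP. change (Cprod (map (fun x0 => qfact q (eta X x0)) (Lambda X))) with (DD q X).
  unfold Cdiv. unfold Lambda, eta, Xmove. ring.
Qed.
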